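(* Let $0<a<1/2$, $0\le c\le\sqrt2$, $A\in\{0,1\}$, and let $J,K,M\ge0$ be constants. Then the integral $$\int_0^\infty\int_{-\infty}^\infty s^J\sqrt{a^2+v^2}^{\,-M}\sqrt{(s^2+1/2-a)^2+v^2}^{\,-K}\sqrt{(s^2+1-a-sc)^2+v^2}^{\,-A}\,dv\,ds$$ converges provided $J-2K-2A<-1$ and $J-2K-2A+1-2M<-2$. *)

(* Defs.v *)
From HB Require Import structures.
From mathcomp Require Import all_boot all_order all_algebra.
From mathcomp Require Import all_classical all_reals all_analysis.
Set Implicit Arguments. Unset Strict Implicit. Unset Printing Implicit Defensive.
Import Order.TTheory GRing.Theory Num.Theory.
Local Open Scope ring_scope.

Definition integrand5p4 (R : realType) (a c : R) (A : nat) (J K M : R)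
  (s v : R) : R :=
  s `^ J
  * (Num.sqrt (a ^+ 2 + v ^+ 2)) `^ (- M)
  * (Num.sqrt ((s ^+ 2 + 2^-1 - a) ^+ 2 + v ^+ 2)) `^ (- K)
  * (Num.sqrt ((s ^+ 2 + 1 - a - s * c) ^+ 2 + v ^+ 2)) `^ (- A%:R).

(* Main.v *)
Require Import Defs.
From HB Require Import structures.
From mathcomp Require Import all_boot all_order all_algebra.
From mathcomp Require Import all_classical all_reals all_analysis.
From mathcomp Require Import measurable_realfun.
From mathcomp Require Import lra.
Import Order.TTheory GRing.Theory Num.Theory.
Import numFieldNormedType.Exports.
Local Open Scope classical_set_scope.
Local Open Scope ring_scope.

Section S.
Context {R : realType}.
Lemma shift_der (b x : R) : is_derive x 1 (fun y : R => b + y) 1.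
Proof.
Timeout 10 have e : (fun y : R => b + y) = (cst b + id) by apply/funext.
Timeout 10 rewrite e.
Timeout 10 have h : is_derive x 1 (cst b + id) (0 + 1) by exact: is_deriveD.
Timeout 10 rewrite add0r in h.
Timeout 10 exact: h.
Qed.
Lemma is_derive_shift_powR (b r x : R) : 0 < b + x ->
  is_derive x 1 (fun y => (b+y) `^ r) (r * (b+x) `^ (r-1)).
Proof.
move=> bx.
Timeout 10 have d1 : derivable (fun y : R => b + y) x 1 by case: (shift_der b x).
Timeout 10 have d2 : derivable (@powR R ^~ r) (b + x) 1.
  by apply: derivable_powR; rewrite in_itv /= andbT.
Timeout 10 have dc : derivable ((@powR R ^~ r) \o (fun y : R => b + y)) x 1.
  apply/derivable1_diffP; apply: differentiable_comp; exact/derivable1_diffP.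
Timeout 10 have E : 'D_1 ((@powR R ^~ r) \o (fun y : R => b + y)) x = r * (b+x) `^ (r-1).
  Timeout 10 rewrite -derive1E.
  Timeout 10 rewrite (derive1_comp d1 d2).
  Timeout 10 rewrite powR_derive1; last by rewrite in_itv /= andbT.
  Timeout 10 rewrite derive1E.
  Timeout 10 have [_ ->] := shift_der b x.
  by rewrite mulr1.
Timeout 10 have := derivableP dc.
Timeout 10 rewrite E.
Timeout 10 exact.
Qed.

Lemma powR_cont (r y : R) : 0 < y -> {for y, continuous (fun x : R => x `^ r)}.
Proof.
move=> y0; apply: differentiable_continuous; apply/derivable1_diffP.
by apply: derivable_powR; rewrite in_itv /= andbT.
Qed.
Lemma contf (b p : R) : 0 < b -> continuous (fun x : R => (b + `|x|) `^ p).
Proof.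
move=> b0 x.
apply: (@continuous_comp _ _ _ (fun x : R => b + `|x|) (@powR R ^~ p)).
  apply: continuousD; first exact: cst_continuous. exact: norm_continuous.
apply: powR_cont. by rewrite ltr_wpDr.
Qed.

Lemma shift_powR_cvg0 (b r : R) : 0 < b -> r < 0 ->
  (fun x => (b + x) `^ r) x @[x --> +oo] --> 0.
Proof.
move=> b0 r0; apply/cvgrPdist_lt => e e0.
exists (expR (ln e / r)); split; first exact: num_real.
move=> x Mx.
have x0 : 0 < x by apply: lt_trans Mx; exact: expR_gt0.
have bx : 0 < b + x by rewrite addr_gt0.
rewrite sub0r normrN ger0_norm ?powR_ge0 //.
rewrite /powR gt_eqF // -[X in _ < X](lnK e0) ltr_expR.
rewrite mulrC -ltr_ndivrMr //.
rewrite -[X in X < _]expRK ltr_ln ?posrE ?expR_gt0 //.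
apply: lt_trans Mx _; by rewrite ltrDr.
Qed.

Lemma int_shift (b p : R) : 0 < b -> 1 < p ->
  (\int[@lebesgue_measure R]_(x in `[0%R, +oo[) ((b + `|x|) `^ (-p))%:E
    = (- ((1-p)^-1 * b `^ (1-p)))%:E)%E.
Proof.
move=> b0 p1.
set F := fun x : R => (1-p)^-1 * (b + x) `^ (1-p).
have p0 : 1 - p != 0 by rewrite subr_eq0 lt_eqF.
have dF : forall x : R, 0 < b + x -> is_derive x 1 F ((b + x) `^ (-p)).
  move=> x bx.
  have h := @is_derive_shift_powR b (1-p) x bx.
  have h2 := is_deriveZ ((1-p)^-1) h.
  have eF : F = (1-p)^-1 \*: (fun y => (b+y) `^ (1-p)) by apply/funext.
  rewrite eF; apply: (is_derive_eq h2).
  by rewrite [X in X = _]mulrA mulVf // mul1r addrAC subrr add0r.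
have := @ge0_continuous_FTC2y R (fun x => (b + `|x|) `^ (-p)) F 0 0.
rewrite sub0e /F addr0.
apply.
- by move=> x _; exact: powR_ge0.
- apply: continuous_subspaceT; exact: contf.
- rewrite -[X in _ --> X](mulr0 ((1-p)^-1)).
  apply: cvgMl_tmp; apply: shift_powR_cvg0 => //; by rewrite subr_lt0.
- move=> x x0; have [] := dF x (addr_gt0 b0 x0); done.
- apply: cvg_at_right_filter.
  have b0' : 0 < b + 0 by rewrite addr0.
  have [d _] := dF 0 b0'.
  have c : {for 0, continuous F} by apply: differentiable_continuous; exact/derivable1_diffP.
  by move: c; rewrite /prop_for /continuous_at /F /= addr0.
- move=> x; rewrite in_itv /= andbT => x0.
  rewrite derive1E; have [_ ->] := dF x (addr_gt0 b0 x0).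
  by rewrite gtr0_norm.
Qed.

Lemma int_shiftT (b p : R) : 0 < b -> 1 < p ->
  (@lebesgue_measure R).-integrable setT (fun x : R => ((b + `|x|) `^ (-p))%:E).
Proof.
move=> b0 p1.
have mh : measurable_fun setT (fun x : R => (b + `|x|) `^ (-p)).
  by apply: continuous_measurable_fun; exact: contf.
apply/integrableP; split; first exact/measurable_EFinP.
under eq_integral => x _ do rewrite gee0_abs ?lee_fin ?powR_ge0 //.
rewrite ge0_symfun_integralT; last 3 first.
- by move=> x; exact: powR_ge0.
- exact: contf.
- by move=> x /=; rewrite normrN.
rewrite -set_itvcy int_shift // -EFinM.
exact: ltry.
Qed.

Local Notation mu := (@lebesgue_measure R).

Lemma prod_integrable (g h : R -> R) : (forall x, 0 <= g x) -> (forall y, 0 <= h y) ->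
  measurable_fun setT g -> measurable_fun setT h ->
  mu.-integrable setT (EFin \o g) -> mu.-integrable setT (EFin \o h) ->
  ((mu \x mu)%E).-integrable setT (fun z : R * R => (g z.1 * h z.2)%:E).
Proof.
move=> g0 h0 mg mh ig ih.
have mf : measurable_fun setT (fun z : R * R => (g z.1 * h z.2)%:E).
  apply/measurable_EFinP; apply: measurable_funM.
    exact: measurableT_comp mg measurable_fst.
  exact: measurableT_comp mh measurable_snd.
apply/(@integrable12ltyP _ _ _ _ R mu mu _ mf).
under eq_integral => x _ do (under eq_integral => y _ do rewrite gee0_abs ?lee_fin ?mulr_ge0 //= EFinM).
have E : forall x, (\int[mu]_y ((g x)%:E * (h y)%:E) = (g x)%:E * \int[mu]_y (h y)%:E)%E.
  move=> x; rewrite ge0_integralZl_EFin //.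
  - by move=> y _; rewrite lee_fin.
  - exact/measurable_EFinP.
under eq_integral => x _ do rewrite E.
rewrite ge0_integralZr //; last 3 first.
- exact/measurable_EFinP.
- by move=> x _; rewrite lee_fin.
- by apply: integral_ge0 => y _; rewrite lee_fin.
move: ig ih => /integrableP[_ ig] /integrableP[_ ih].
have e1 : (\int[mu]_x `|(EFin \o g) x| = \int[mu]_x (g x)%:E)%E.
  by apply: eq_integral => x _; rewrite gee0_abs ?lee_fin.
have e2 : (\int[mu]_x `|(EFin \o h) x| = \int[mu]_x (h x)%:E)%E.
  by apply: eq_integral => x _; rewrite gee0_abs ?lee_fin.
rewrite e1 in ig; rewrite e2 in ih.
apply: lte_mul_pinfty => //.
- by apply: integral_ge0 => y _; rewrite lee_fin.
- rewrite ge0_fin_numE //; by apply: integral_ge0 => y _; rewrite lee_fin.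
Qed.
End S.

Section P.
Context {R : realType}.

Lemma sqrt_ge (x y : R) : 0 <= x -> x ^+ 2 <= y -> x <= Num.sqrt y.
Proof.
move=> x0 xy; rewrite -[X in X <= _](ger0_norm x0) -sqrtr_sqr.
exact: ler_wsqrtr.
Qed.

Lemma powR_expR (x r : R) : 0 < x -> x `^ r = expR (r * ln x).
Proof. by move=> x0; rewrite /powR gt_eqF. Qed.

Lemma ln_le (x y : R) : 0 < x -> x <= y -> ln x <= ln y.
Proof.
move=> x0 xy; rewrite ler_ln ?posrE //; exact: lt_le_trans xy.
Qed.

Lemma lnM' (x y : R) : 0 < x -> 0 < y -> ln (x * y) = ln x + ln y.
Proof. by move=> x0 y0; rewrite lnM ?posrE. Qed.

Lemma pointwise (a c : R) (A : nat) (J K M al s v : R) :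
  0 < a -> a < 2^-1 -> 0 <= c -> c ^+ 2 <= 2 -> 0 <= A%:R :> R ->
  0 <= J -> 0 <= K -> 0 <= M -> 0 <= al -> al <= 1 -> 0 < s ->
  integrand5p4 a c A J K M s v <=
  expR (- M * ln (2^-1) - al * (K + A%:R) * ln ((2^-1 - a) / 4)
        - (1 - al) * (K + A%:R) * ln ((2^-1 - a) / 2))
  * (1 + s) `^ (- (2 * al * (K + A%:R) - J))
  * (a + `|v|) `^ (- (M + (1 - al) * (K + A%:R))).
Proof.
move=> a0 a1 c0 c2 A0 J0 K0 M0 al0 al1 s0.
rewrite /integrand5p4.
set A' : R := A%:R.
set Y := 1 + s. set W := a + `|v|.
set X1 := Num.sqrt (a ^+ 2 + v ^+ 2).
set t := s ^+ 2 + 2^-1 - a.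
set u := s ^+ 2 + 1 - a - s * c.
set X2 := Num.sqrt (t ^+ 2 + v ^+ 2).
set X3 := Num.sqrt (u ^+ 2 + v ^+ 2).
have Y0 : 0 < Y by rewrite /Y; lra.
have v0 : 0 <= `|v| by [].
have W0 : 0 < W by rewrite /W; lra.
have d0 : 0 < 2^-1 - a by lra.
have s2 : 0 <= s ^+ 2 by rewrite sqr_ge0.
have t0 : 2^-1 - a <= t by rewrite /t; lra.
have hu : (2^-1 - a) / 2 * (1 + s ^+ 2) <= u.
  have h1 : 0 <= (1 - (2^-1 - a)) * (s - c / 2) ^+ 2 by apply: mulr_ge0; [lra | exact: sqr_ge0].
  have h2 : 0 <= (2^-1 - a) * (s - c) ^+ 2 by apply: mulr_ge0; [lra | exact: sqr_ge0].
  have h3 : 0 <= (1 + (2^-1 - a)) * (2 - c ^+ 2) by apply: mulr_ge0; lra.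
  rewrite /u; move: h1 h2 h3; rewrite !expr2; lra.
have sY : (1 + s) ^+ 2 <= 2 * (1 + s ^+ 2).
  have := sqr_ge0 (1 - s); rewrite !expr2; lra.
have u0 : (2^-1 - a) / 2 <= u.
  apply: le_trans hu.
  have : 0 <= (2^-1 - a) / 2 * s ^+ 2 by apply: mulr_ge0 => //; lra.
  lra.
have vX (x : R) : `|v| <= Num.sqrt (x ^+ 2 + v ^+ 2).
  apply: sqrt_ge => //; rewrite -normrX ger0_norm ?sqr_ge0 //.
  by rewrite lerDr sqr_ge0.
have tX (x : R) : 0 <= x -> x <= Num.sqrt (x ^+ 2 + v ^+ 2).
  by move=> x0; apply: sqrt_ge => //; rewrite lerDl sqr_ge0.
have X2t : t <= X2 by apply: tX; lra.
have X3u : u <= X3 by apply: tX; lra.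
have X1W : 2^-1 * W <= X1.
  apply: sqrt_ge; first lra.
  have h := sqr_ge0 (a - `|v|).
  have h' : `|v| ^+ 2 = v ^+ 2 by rewrite -normrX ger0_norm ?sqr_ge0.
  have ha := sqr_ge0 a; have hv := sqr_ge0 v.
  move: h h' ha hv; rewrite /W !expr2; lra.
have eY (X : R) : (2^-1 - a) / 2 * (1 + s ^+ 2) <= X -> (2^-1 - a) / 4 * Y * Y <= X.
  move=> h; apply: le_trans h.
  have : (2^-1 - a) * (Y * Y) <= (2^-1 - a) * (2 * (1 + s ^+ 2)).
    by rewrite ler_pM2l // -expr2.
  lra.
have kW (X : R) : (2^-1 - a) / 2 <= X -> `|v| <= X -> (2^-1 - a) / 2 * W <= X.
  move=> h1 h2.
  have : (2^-1 - a) * a <= (2^-1 - a) * 2^-1 by rewrite ler_pM2l //; lra.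
  have : (2^-1 - a) * `|v| <= 2^-1 * `|v| by apply: ler_wpM2r => //; lra.
  rewrite /W; lra.
have ht : (2^-1 - a) / 2 * (1 + s ^+ 2) <= t.
  have : (2^-1 - a) * s ^+ 2 <= 1 * s ^+ 2 by apply: ler_wpM2r => //; lra.
  rewrite /t; lra.
have X1p : 0 < X1 by apply: lt_le_trans X1W; lra.
have X2p : 0 < X2 by apply: lt_le_trans X2t; lra.
have X3p : 0 < X3 by apply: lt_le_trans X3u; lra.
have e4 : 0 < (2^-1 - a) / 4 by lra.
have e2 : 0 < (2^-1 - a) / 2 by lra.
have l1 : ln s <= ln Y by apply: ln_le => //; rewrite /Y; lra.
have l2 : ln (2^-1) + ln W <= ln X1 by rewrite -lnM' //; apply: ln_le => //; apply: mulr_gt0.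
have l3 : ln ((2^-1 - a) / 4) + ln Y + ln Y <= ln X2.
  rewrite -!lnM' //; last exact: mulr_gt0.
  apply: ln_le; first by do 2 apply: mulr_gt0 => //.
  apply: eY; exact: le_trans ht X2t.
have l4 : ln ((2^-1 - a) / 2) + ln W <= ln X2.
  rewrite -!lnM' //; apply: ln_le; first exact: mulr_gt0.
  by apply: kW; [lra | exact: vX].
have l5 : ln ((2^-1 - a) / 4) + ln Y + ln Y <= ln X3.
  rewrite -!lnM' //; last exact: mulr_gt0.
  apply: ln_le; first by do 2 apply: mulr_gt0 => //.
  apply: eY; exact: le_trans hu X3u.
have l6 : ln ((2^-1 - a) / 2) + ln W <= ln X3.
  rewrite -!lnM' //; apply: ln_le; first exact: mulr_gt0.
  by apply: kW; [lra | exact: vX].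
have al1' : 0 <= 1 - al by lra.
have m1 := ler_wpM2l J0 l1.
have m2 := ler_wpM2l M0 l2.
have m3 := ler_wpM2l (mulr_ge0 al0 K0) l3.
have m4 := ler_wpM2l (mulr_ge0 al1' K0) l4.
have m5 := ler_wpM2l (mulr_ge0 al0 A0) l5.
have m6 := ler_wpM2l (mulr_ge0 al1' A0) l6.
rewrite !powR_expR // -!expRD ler_expR.
lra.
Qed.
End P.

Lemma m_pow (R : realType) (k : R * R -> R) r : measurable_fun setT k ->
  measurable_fun setT (fun p => k p `^ r).
Proof. by move=> mk; exact: measurableT_comp (measurable_powR r) mk. Qed.

Lemma m_sqrt (R : realType) (k : R * R -> R) : measurable_fun setT k ->
  measurable_fun setT (fun p => Num.sqrt (k p)).
Proof.
move=> mk; apply: measurableT_comp mk => //.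
apply: continuous_measurable_fun; exact: sqrt_continuous.
Qed.

Theorem lemma5p4 (R : realType) (a c : R) (A : nat) (J K M : R)
  (ha0 : 0 < a) (ha1 : a < 2^-1) (hc0 : 0 <= c) (hc1 : c <= Num.sqrt 2)
  (hA : (A <= 1)%N) (hJ : 0 <= J) (hK : 0 <= K) (hM : 0 <= M)
  (h1 : J - 2 * K - 2 * A%:R < -1)
  (h2 : J - 2 * K - 2 * A%:R + 1 - 2 * M < -2) :
  ((@lebesgue_measure R) \x (@lebesgue_measure R))%E.-integrable
    (`]0, +oo[%classic `*` setT)
    (fun p : R * R => (integrand5p4 a c A J K M p.1 p.2)%:E).
Proof.
have A0 : 0 <= A%:R :> R by [].
have c2 : c ^+ 2 <= 2.
  have h := ler_pM hc0 hc0 hc1 hc1.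
  by rewrite -!expr2 sqr_sqrtr // in h.
have [d [d0 dG1 dG2]] : exists d : R,
    [/\ 0 < d, d < 2 * (K + A%:R) - J - 1 & d < 2 * (K + A%:R) + 2 * M - 3 - J].
  have [hG|hG] := leP (2 * (K + A%:R) - J - 1) (2 * (K + A%:R) + 2 * M - 3 - J).
    by exists ((2 * (K + A%:R) - J - 1) / 2); split; lra.
  by exists ((2 * (K + A%:R) + 2 * M - 3 - J) / 2); split; lra.
have S0 : 0 < K + A%:R by lra.
set al := (J + 1 + d) / (2 * (K + A%:R)).
have hal : al * (2 * (K + A%:R)) = J + 1 + d.
  by rewrite /al mulfVK // gt_eqF // mulr_gt0.
have al0 : 0 <= al by rewrite /al; apply: divr_ge0; lra.
have al1 : al <= 1 by rewrite /al ler_pdivrMr ?mulr_gt0 //; lra.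
have q1 : 1 < 2 * al * (K + A%:R) - J by lra.
have P1 : 1 < M + (1 - al) * (K + A%:R) by lra.
set q := 2 * al * (K + A%:R) - J.
set P := M + (1 - al) * (K + A%:R).
set c0 := - M * ln (2^-1) - al * (K + A%:R) * ln ((2^-1 - a) / 4)
        - (1 - al) * (K + A%:R) * ln ((2^-1 - a) / 2).
pose g := fun s : R => expR c0 * (1 + `|s|) `^ (- q).
pose h := fun v : R => (a + `|v|) `^ (- P).
have g0 x : 0 <= g x by rewrite /g mulr_ge0 ?powR_ge0 // ltW // expR_gt0.
have h0 x : 0 <= h x by rewrite /h powR_ge0.
have mg : measurable_fun setT g.
  apply: measurable_funM; first exact: measurable_cst.
  apply: continuous_measurable_fun; exact: contf.
have mh : measurable_fun setT h.
  by apply: continuous_measurable_fun; exact: contf.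
have ig : (@lebesgue_measure R).-integrable setT (EFin \o g).
  have -> : EFin \o g = (fun x => (expR c0)%:E * ((1 + `|x|) `^ (- q))%:E)%E.
    by apply/funext => x; rewrite /= EFinM.
  apply: integrableZl; first exact: measurableT.
  exact: int_shiftT ltr01 q1.
have ih : (@lebesgue_measure R).-integrable setT (EFin \o h).
  exact: int_shiftT ha0 P1.
have B := prod_integrable g h g0 h0 mg mh ig ih.

apply: le_integrable; last first.
- apply: (integrableS measurableT _ _ B).
  + apply: measurableX => //; exact: measurable_itv.
  + exact: subsetT.
- move=> [s v] [/= s0 _].
  move: s0; rewrite /= in_itv /= andbT => s0.
  have f0 : 0 <= integrand5p4 a c A J K M s v.
    by rewrite /integrand5p4 !mulr_ge0 ?powR_ge0.
  rewrite /= lee_fin (ger0_norm f0) (ger0_norm (mulr_ge0 (g0 s) (h0 v))).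
  rewrite /g /h gtr0_norm //.
  exact: pointwise.
- apply: measurable_funTS; apply/measurable_EFinP; rewrite /integrand5p4.
  repeat first [exact: measurable_cst | exact: measurable_fst | exact: measurable_snd
    | apply: measurable_funM | apply: measurable_funB | apply: measurable_funD
    | apply: measurable_funN
    | apply: measurable_funX | apply: m_pow | apply: m_sqrt].
apply: measurableX => //; exact: measurable_itv.
Qed.
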